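(* Let $\Bbbk$ be an algebraically closed field of characteristic zero, $G$ a finite group, $\chi:G\to\Bbbk^\times$ a linear character, $g\in Z(G)$, $n\geq2$ the multiplicative order of $\chi(g)$, and let $H$ be either the $\Bbbk$-algebra generated by $\Bbbk G$ and $z$ with relations $z^n=0$, $zs=\chi(s)sz$ ($s\in G$), or (when $\chi^n=1$ and $g^n\neq1$) the $\Bbbk$-algebra generated by $\Bbbk G$ and $z$ with relations $z^n=g^n-1$, $zs=\chi(s)sz$ ($s\in G$). Then $z^{l+1}\in(z^l(1-e_s))$ for all $0\leq s\leq p-1$ and $0\leq l\leq n-1$.
   Context: $\chi_0,\dots,\chi_{p-1}$ are the irreducible characters of $G$ and $e_s=\frac{\chi_s(1)}{|G|}\sum_{h\in G}\chi_s(h)h^{-1}$. $(a)$ denotes the two-sided ideal of $H$ generated by $a$. *)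

(* Defs.v *)
From HB Require Import structures.
From mathcomp Require Import all_boot all_order all_algebra all_fingroup all_solvable.
From mathcomp Require Import mxrepresentation.
Set Implicit Arguments. Unset Strict Implicit. Unset Printing Implicit Defensive.
Import GRing.Theory.
Local Open Scope ring_scope.

Definition in_ideal (A : nzRingType) (a b : A) : Prop :=
  exists (m : nat) (x y : 'I_m -> A), b = \sum_(i < m) x i * a * y i.

(* Image in A (via the linear extension of rho : G -> A to kG) of the central
   primitive idempotent e = chi(1)/|G| sum_{h in G} chi(h) h^{-1}, where chi is
   the character afforded by the representation rG of degree d. *)
Definition prim_idem (k : fieldType) (gT : finGroupType) (G : {group gT})
  (A : algType k) (rho : gT -> A) (d : nat) (rG : mx_representation k G d) : A :=
  \sum_(h in G) ((d%:R / (#|G|%:R)) * \tr (rG h)) *: rho (h^-1)%g.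

(* Main.v *)
Require Import Defs.
From HB Require Import structures.
From mathcomp Require Import all_boot all_order all_algebra all_fingroup all_solvable.
From mathcomp Require Import mxrepresentation.
Import GRing.Theory.
Local Open Scope ring_scope.

Lemma zz (V : zmodType) (a x t y b : V) : a - x + (x - t) + (y - b) + (t - y) = a - b.
Proof.
rewrite (addrA (a - x)) subrK -(addrA (a - t)) (addrC (y - b)) (addrA (t - y)) subrK.
by rewrite (addrA (a - t)) subrK.
Qed.
Lemma combo (K : fieldType) (V : lmodType K) (P Q S T U : V) (c lam ze : K) :
  c * (lam * (1 - ze)) = 1 -> ze *: U = T ->
  P = (c*lam)*:(P - Q) - c*:(T - lam*:Q) - (c*ze*lam)*:(P - S) + (c*ze)*:(U - lam*:S).
Proof.
move=> Hc HU.
rewrite !scalerBr !scalerA -(scalerA c ze U) HU.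
rewrite -(mulrA c ze lam) !opprB zz -scalerBl.
by rewrite -mulrBr -{1}(mul1r lam) -mulrBl (mulrC (1 - ze)) Hc scale1r.
Qed.

Theorem lemma4p1 (k : closedFieldType) (Hchar : [pchar k] =i pred0)
  (gT : finGroupType) (G : {group gT})
  (chi : gT -> k)
  (chiM : forall s t, s \in G -> t \in G -> chi (s * t)%g = chi s * chi t)
  (chi_neq0 : forall s, s \in G -> chi s != 0)
  (g : gT) (gZ : g \in ('Z(G))%g)
  (n : nat) (n_ge2 : (2 <= n)%N) (ord_chig : n.-primitive_root (chi g))
  (A : algType k) (rho : gT -> A)
  (rho1 : rho 1%g = 1)
  (rhoM : forall s t, s \in G -> t \in G -> rho (s * t)%g = rho s * rho t)
  (z : A)
  (zs : forall s, s \in G -> z * rho s = chi s *: (rho s * z))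
  (rel : z ^+ n = 0 \/
         ((forall s, s \in G -> chi s ^+ n = 1) /\ (g ^+ n)%g != 1%g /\
          z ^+ n = rho g ^+ n - 1)) :
  forall (d : nat) (rG : mx_representation k G d), mx_irreducible rG ->
  forall l : nat, (l < n)%N ->
    in_ideal (z ^+ l * (1 - prim_idem rho rG)) (z ^+ l.+1).
Proof.
move=> d rG irrG l _.
have absG := group_closure_closed_field irrG.
have Gg : g \in G by move: gZ => /setIP[].
have cg : forall x, x \in G -> (g * x = x * g)%g.
  move=> x Gx; move: gZ => /setIP[_ /centP cgG]; exact: cgG.
have /is_scalar_mxP[lam Hlam] : is_scalar_mx (rG g).
  apply: (mx_abs_irr_cent_scalar absG); apply/centgmxP => x Gx.
  by rewrite -!repr_mxM // cg.
have lam0 : lam != 0.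
  apply/eqP => l0; case: irrG => _ /negP nz _; apply: nz.
  rewrite -(repr_mx1 rG) -(mulgV g) repr_mxM ?groupV // Hlam l0.
  by rewrite mul_scalar_mx scale0r.
set ze := chi g.
have ze1 : 1 - ze != 0.
  rewrite subr_eq0; apply/eqP => e1.
  have := prim_order_dvd ord_chig 1; rewrite expr1 -/ze -e1 eqxx.
  by move/dvdn_leq => /(_ isT); rewrite leqNgt n_ge2.
set e := prim_idem rho rG.
set R := rho g.
have eR : e * R = lam *: e.
  rewrite /e /prim_idem mulr_suml scaler_sumr.
  rewrite (reindex_inj (mulgI g)) /=.
  apply: eq_big => [h|h Gh0]; first by rewrite groupMl.
  have Gh : h \in G by rewrite -(groupMl _ Gg).
  rewrite -scalerAl -rhoM ?groupV // invMg -mulgA mulVg mulg1 scalerA.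
  congr (_ *: _); rewrite (repr_mxM rG) //. have HH : rG g *m rG h = lam *: rG h by rewrite -mul_scalar_mx; congr (_ *m _). rewrite HH mxtraceZ.
  by rewrite mulrCA.
have zR : z * R = ze *: (R * z) by exact: zs.
set a := z ^+ l * (1 - e).
set c := (lam * (1 - ze))^-1.
rewrite /in_ideal; exists 4%N.
exists [ffun i : 'I_4 => [:: (c * lam) *: z; - (c *: z); - ((c * ze * lam)%:A); (c * ze)%:A]`_i].
exists [ffun i : 'I_4 => [:: 1; R; z; R * z]`_i].
rewrite !big_ord_recr big_ord0 /= !ffunE /= add0r.
rewrite mulr1 !mulNr !mulr_algl -!scalerAl.
have aR : a * R = z ^+ l * R - lam *: (z ^+ l * e).
  by rewrite /a -mulrA mulrBl mul1r eR mulrBr -scalerAr.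
have za : z * a = z ^+ l.+1 - z ^+ l.+1 * e.
  by rewrite /a mulrA -exprS mulrBr mulr1.
have zaR : z * a * R = z ^+ l.+1 * R - lam *: (z ^+ l.+1 * e).
  by rewrite -mulrA aR mulrBr -scalerAr !mulrA -exprS.
have az : a * z = z ^+ l.+1 - z ^+ l * e * z.
  by rewrite /a mulrBr mulr1 mulrBl -exprSr.
have aRz : a * (R * z) = z ^+ l * R * z - lam *: (z ^+ l * e * z).
  by rewrite mulrA aR mulrBl -scalerAl.
have HU : ze *: (z ^+ l * R * z) = z ^+ l.+1 * R.
  by rewrite -mulrA scalerAr -zR mulrA -exprSr.
rewrite zaR za az aRz.
apply: combo HU.
by rewrite /c mulVf // mulf_neq0.
Qed.
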